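(* Let $C=C_{9,1}$ be the Clifford system of rank $10$ on $\mathbb{R}^{32}$. Then the Clifford foliation $(\mathbb{S}^{31},\mathcal{F}_C)$ is not homogeneous.
   Context: A Clifford system $C$ of rank $m+1$ on $\mathbb{R}^{2l}$, with the standard inner product, is an $(m+1)$-dimensional linear subspace $\mathbb{R}_C$ of the symmetric endomorphisms of $\mathbb{R}^{2l}$. It must admit a basis $P_0,\dots,P_m$ with $P_i^2=\mathrm{Id}$ and $P_iP_j=-P_jP_i$ for $i\ne j$. For $m=9$ and $l=16$ such a system exists and is unique up to conjugation by $O(32)$; it is denoted $C_{9,1}$. The map $\pi_C$ is $\pi_C(x)=\sum_i\langle P_ix,x\rangle P_i$ on $\mathbb{S}^{2l-1}$, and $\mathcal{F}_C$ is the partition into fibers of $\pi_C$. Homogeneous means the leaves are the orbits of an isometric action of a connected Lie group. *)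

(* Defs.v *)
(* real linear algebra on R^n with vectors nat -> R and
   matrices nat -> nat -> R; only indices < n are meaningful. *)
From Stdlib Require Import Reals Lra Lia Arith.
Open Scope R_scope.

Definition vec := nat -> R.
Definition mat := nat -> nat -> R.

Fixpoint rsum (n : nat) (f : nat -> R) : R :=
  match n with O => 0 | S k => rsum k f + f k end.

Definition dot (n : nat) (x y : vec) : R := rsum n (fun i => x i * y i).
Definition mv (n : nat) (A : mat) (x : vec) : vec :=
  fun i => rsum n (fun j => A i j * x j).
Definition mm (n : nat) (A B : mat) : mat :=
  fun i k => rsum n (fun j => A i j * B j k).
Definition tr (A : mat) : mat := fun i j => A j i.
Definition idm : mat := fun i j => if Nat.eq_dec i j then 1 else 0.
Definition mopp (A : mat) : mat := fun i j => - A i j.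

Definition vec_eq (n : nat) (x y : vec) : Prop :=
  forall i, (i < n)%nat -> x i = y i.
Definition mat_eq (n : nat) (A B : mat) : Prop :=
  forall i j, (i < n)%nat -> (j < n)%nat -> A i j = B i j.

Definition symmetric (n : nat) (A : mat) : Prop :=
  forall i j, (i < n)%nat -> (j < n)%nat -> A i j = A j i.

Definition sphere (n : nat) (x : vec) : Prop := dot n x x = 1.

(* A Clifford system of rank m+1 on R^(2l), given by a basis P_0,...,P_m of
   symmetric endomorphisms with P_i^2 = Id and P_i P_j = - P_j P_i (i <> j). *)
Definition clifford_system (m l : nat) (P : nat -> mat) : Prop :=
  (forall i, (i <= m)%nat -> symmetric (2 * l) (P i)) /\
  (forall i, (i <= m)%nat -> mat_eq (2 * l) (mm (2 * l) (P i) (P i)) idm) /\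
  (forall i j, (i <= m)%nat -> (j <= m)%nat -> i <> j ->
     mat_eq (2 * l) (mm (2 * l) (P i) (P j)) (mopp (mm (2 * l) (P j) (P i)))).

Definition piC (m n : nat) (P : nat -> mat) (x : vec) : mat :=
  fun a b => rsum (S m) (fun i => dot n (mv n (P i) x) x * P i a b).

Definition same_leaf (m n : nat) (P : nat -> mat) (x y : vec) : Prop :=
  mat_eq n (piC m n P x) (piC m n P y).

Definition orthogonal (n : nat) (A : mat) : Prop :=
  mat_eq n (mm n (tr A) A) idm.

Definition orth_subgroup (n : nat) (G : mat -> Prop) : Prop :=
  (forall A, G A -> orthogonal n A) /\
  G idm /\
  (forall A B, G A -> G B -> G (mm n A B)) /\
  (forall A, G A -> G (tr A)).

Definition path_connected (n : nat) (G : mat -> Prop) : Prop :=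
  forall A B, G A -> G B ->
    exists gamma : R -> mat,
      (forall t, 0 <= t <= 1 -> G (gamma t)) /\
      mat_eq n (gamma 0) A /\ mat_eq n (gamma 1) B /\
      (forall i j, (i < n)%nat -> (j < n)%nat -> continuity (fun t => gamma t i j)).

(* The foliation (S^{2l-1}, F_C) is homogeneous: its leaves are the orbits of
   an isometric action of a connected Lie group, i.e. (image in Isom(S^{2l-1})
   = O(2l)) of a path-connected subgroup G of O(2l). *)
Definition homogeneous_clifford (m l : nat) (P : nat -> mat) : Prop :=
  exists G : mat -> Prop,
    orth_subgroup (2 * l) G /\ path_connected (2 * l) G /\
    forall x y, sphere (2 * l) x -> sphere (2 * l) y ->
      (same_leaf m (2 * l) P x y <->
       exists g, G g /\ vec_eq (2 * l) (mv (2 * l) g x) y).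

(* Main.v *)
Require Import Defs.
From Stdlib Require Import Reals Lra.
Set Warnings "-notation-overridden,-ambiguous-paths,-masking-absolute-name".
From mathcomp Require Import all_boot all_order all_algebra.
From mathcomp Require Import Rstruct.
Set Implicit Arguments. Unset Strict Implicit. Unset Printing Implicit Defensive.
Import Order.TTheory GRing.Theory Num.Theory.
Local Open Scope ring_scope.

Section SB.
Variable K : realFieldType.
Variable P : 'I_10 -> 'M[K]_32.
Hypothesis Psym : forall i, (P i)^T = P i.
Hypothesis Psq : forall i, P i *m P i = 1%:M.
Hypothesis Panti : forall i j, i != j -> P i *m P j = - (P j *m P i).

Definition PSr (r : seq 'I_10) (S : {set 'I_10}) : 'M[K]_32 :=
  \big[mulmx/1%:M]_(i <- r | i \in S) P i.

Definition sgr (r : seq 'I_10) (S : {set 'I_10}) (i : 'I_10) : K :=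
  \prod_(j <- r | j \in S) (if j == i then 1 else -1).

Lemma conj_PSr i r S : P i *m PSr r S *m P i = sgr r S i *: PSr r S.
Proof.
rewrite /PSr /sgr; elim: r => [|j r IH].
  by rewrite !big_nil mulmx1 Psq scale1r.
rewrite !big_cons; case: (j \in S) => //.
have -> : P i *m (P j *m \big[mulmx/1%:M]_(i0 <- r | i0 \in S) P i0) *m P i
   = (P i *m P j *m P i) *m (P i *m \big[mulmx/1%:M]_(i0 <- r | i0 \in S) P i0 *m P i).
  by rewrite !mulmxA -(mulmxA _ (P i) (P i)) Psq mulmx1.
rewrite IH.
have -> : P i *m P j *m P i = (if j == i then 1 else -1) *: P j.
  case: eqP => [->|/eqP ne]; first by rewrite -mulmxA Psq mulmx1 scale1r.
  by rewrite Panti 1?eq_sym // mulNmx -mulmxA Psq mulmx1 scaleN1r.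
by rewrite -scalemxAl -scalemxAr scalerA.
Qed.

Lemma orth_PSr r S : (PSr r S)^T *m PSr r S = 1%:M.
Proof.
rewrite /PSr; elim: r => [|j r IH]; first by rewrite big_nil trmx1 mulmx1.
rewrite big_cons; case: (j \in S) => //.
by rewrite trmx_mul Psym -mulmxA (mulmxA (P j)) Psq mul1mx.
Qed.

Lemma sgr_val S i : sgr (index_enum 'I_10) S i = (-1) ^+ #|S :\ i|.
Proof.
rewrite /sgr.
transitivity (\prod_(j <- index_enum 'I_10 | j \in S) ((-1 : K) ^+ (j != i))).
  by apply: eq_bigr => j _; case: eqP.
rewrite prodrXr; congr (_ ^+ _).
rewrite -sum1_card big_mkcond [RHS]big_mkcond /=.
apply: eq_bigr => j _; rewrite !inE; case: eqP => //= _; by case: (j \in S).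
Qed.

Lemma combin (S T : {set 'I_10}) : S != T -> exists i, odd #|S :\ i| != odd #|T :\ i|.
Proof.
move=> neST; apply/existsP; apply: contraR neST; rewrite negb_exists => /forallP H.
have H' i : odd #|S| (+) (i \in S) = odd #|T| (+) (i \in T).
  move: (H i); rewrite negbK => /eqP.
  by rewrite (cardsD1 i S) (cardsD1 i T) !oddD; case: (i \in S); case: (i \in T);
     case: (odd _); case: (odd _).
case E: (odd #|S| == odd #|T|).
  apply/eqP/setP => i; move: (H' i); move/eqP: E => ->.
  by case: (odd _); case: (i \in S); case: (i \in T).
have SC : S = ~: T.
  apply/setP => i; rewrite inE; move: (H' i) E.
  by case: (odd #|S|); case: (odd #|T|); case: (i \in S); case: (i \in T).
move: E; have := cardsC T; rewrite card_ord -SC => HC.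
have : odd (#|T| + #|S|) = false by rewrite HC.
by rewrite oddD; case: (odd _); case: (odd _).
Qed.

Lemma tr_anti (c X Y : 'M[K]_32) a b : c^T = c -> c *m c = 1%:M ->
  c *m X *m c = a *: X -> c *m Y *m c = b *: Y -> a * b = -1 ->
  \tr (X^T *m Y) = 0.
Proof.
move=> cs cc hX hY hab.
have : \tr ((c *m X *m c)^T *m (c *m Y *m c)) = \tr (X^T *m Y).
  rewrite !trmx_mul cs -!mulmxA (mulmxA c c) cc mul1mx.
  by rewrite mxtrace_mulC -!mulmxA cc mulmx1.
have tZ : forall k (A : 'M[K]_32), (k *: A)^T = k *: A^T by move=> k A; exact: linearZ.
rewrite hX hY tZ -scalemxAl -scalemxAr !mxtraceZ mulrA hab mulN1r => h.
have h2 : \tr (X^T *m Y) + \tr (X^T *m Y) = 0 by rewrite -{1}h addNr.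
by move/eqP: h2; rewrite -mulr2n mulrn_eq0 /= => /eqP.
Qed.

Definition PS S := PSr (index_enum 'I_10) S.

Lemma cardSet : (32 * 32 = #|{set 'I_10}|)%N.
Proof.
have h : #|powerset [set: 'I_10]| = (2 ^ 10)%N by rewrite card_powerset cardsT card_ord.
have e : powerset [set: 'I_10] = [set: {set 'I_10}].
  by apply/setP => S; rewrite powersetE inE subsetT.
by rewrite e cardsT in h; rewrite h.
Qed.

Definition enumS (k : 'I_(32 * 32)) : {set 'I_10} := enum_val (cast_ord cardSet k).

Lemma enumS_bij : bijective enumS.
Proof.
exists (fun S => cast_ord (esym cardSet) (enum_rank S)) => [k|S]; rewrite /enumS.
  by rewrite enum_valK cast_ordK.
by rewrite cast_ordKV enum_rankK.
Qed.

Lemma dotvec (A B : 'M[K]_32) :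
  \sum_p mxvec A 0 p * mxvec B 0 p = \tr (A^T *m B).
Proof.
rewrite (reindex _ (curry_mxvec_bij _ _)) /=.
rewrite /mxtrace; under [RHS]eq_bigr do rewrite mxE.
rewrite exchange_big pair_bigA /=; apply: eq_bigr => [[i j]] _.
by rewrite /= !mxvecE mxE.
Qed.

Lemma trPS S T : \tr ((PS S)^T *m PS T) = if S == T then 32%:R else 0.
Proof.
case: eqP => [<-|/eqP ne]; first by rewrite orth_PSr mxtrace1.
have [i hi] := combin ne.
apply: (@tr_anti (P i) _ _ ((-1) ^+ #|S :\ i|) ((-1) ^+ #|T :\ i|)).
- exact: Psym.
- exact: Psq.
- by rewrite /PS conj_PSr sgr_val.
- by rewrite /PS conj_PSr sgr_val.
rewrite -exprD -signr_odd oddD.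
by move: hi; case: (odd _); case: (odd _).
Qed.

Definition M : 'M[K]_(32 * 32) := \matrix_(k, p) mxvec (PS (enumS k)) 0 p.

Lemma MMt : M *m M^T = (32%:R : K)%:M.
Proof.
apply/matrixP => k l; rewrite !mxE.
under eq_bigr do rewrite !mxE.
rewrite dotvec trPS.
have [<-|ne] := eqVneq k l; first by rewrite eqxx.
case: eqP => // h; case/negP: ne; apply/eqP.
by case: enumS_bij => f fK _; rewrite -(fK k) -(fK l) h.
Qed.

Lemma MtM : M^T *m M = (32%:R : K)%:M.
Proof.
have n0 : (32%:R : K) != 0 by rewrite pnatr_eq0.
have h : ((32%:R : K)^-1 *: M) *m M^T = 1%:M.
  by rewrite -scalemxAl MMt -mul_scalar_mx -scalar_mxM mulVf.
have := mulmx1C h; rewrite -scalemxAr => h2.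
have := congr1 (fun X => (32%:R : K) *: X) h2.
by rewrite scalerA mulfV // scale1r => ->; rewrite -mul_scalar_mx mulmx1.
Qed.

Section Comm.
Variable g : 'M[K]_32.
Hypothesis gc : forall i, P i *m g = g *m P i.

Lemma trPSg S : S != set0 -> \tr ((PS S)^T *m g) = 0.
Proof.
move=> ne; have [i hi] := combin ne.
apply: (@tr_anti (P i) _ _ ((-1) ^+ #|S :\ i|) 1).
- exact: Psym.
- exact: Psq.
- by rewrite /PS conj_PSr sgr_val.
- by rewrite gc -mulmxA Psq mulmx1 scale1r.
move: hi; rewrite set0D cards0 /= mulr1 -signr_odd; by case: (odd _).
Qed.

Lemma PS0 : PS set0 = 1%:M.
Proof. by rewrite /PS /PSr big_pred0 // => i; rewrite inE. Qed.

Lemma commutant : g = (\tr g / 32%:R)%:M.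
Proof.
have n0 : (32%:R : K) != 0 by rewrite pnatr_eq0.
pose v := mxvec g.
have e1 : v *m M^T *m M = (32%:R : K) *: v by rewrite -mulmxA MtM mul_mx_scalar.
have e2 : v *m M^T *m M = \tr g *: mxvec (1%:M : 'M[K]_32).
  apply/rowP => p; rewrite !mxE.
  under eq_bigr => k _ do rewrite !mxE.
  transitivity (\sum_k (if enumS k == set0 then \tr g * mxvec (1%:M : 'M[K]_32) 0 p else 0)).
    apply: eq_bigr => k _.
    have -> : \sum_j v 0 j * M^T j k = \tr ((PS (enumS k))^T *m g).
      under eq_bigr do rewrite !mxE.
      by rewrite -dotvec; apply: eq_bigr => j _; rewrite mulrC.
    case: eqP => [->|/eqP ne]; last by rewrite trPSg // mul0r.
    by rewrite PS0 trmx1 mul1mx.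
  transitivity (\sum_(S : {set 'I_10}) (if S == set0 then \tr g * mxvec (1%:M : 'M[K]_32) 0 p else 0)).
    by rewrite (reindex enumS (onW_bij _ enumS_bij)).
  by rewrite -big_mkcond big_pred1_eq.
have : mxvec ((32%:R : K) *: g) = mxvec (\tr g *: (1%:M : 'M[K]_32)).
  by rewrite !linearZ /= -/v -e1 e2.
move/(can_inj mxvecK)/(congr1 (fun X => (32%:R : K)^-1 *: X)).
rewrite !scalerA mulVf // scale1r => eg.
by rewrite [LHS]eg scalemx1 mulrC.
Qed.
End Comm.
End SB.

Section Bridge.

Lemma rsumE n (f : nat -> R) : rsum n f = \sum_(i < n) f i.
Proof. by elim: n => [|n IH]; rewrite ?big_ord0 // big_ord_recr /= IH. Qed.

Definition tomx (A : mat) : 'M[R]_32 := \matrix_(i, j) A i j.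
Definition tocol (x : vec) : 'cV[R]_32 := \col_i x i.

Lemma tomx_mm A B : tomx (mm 32 A B) = tomx A *m tomx B.
Proof.
apply/matrixP => i j; rewrite !mxE /mm rsumE; apply: eq_bigr => k _; by rewrite !mxE.
Qed.

Lemma tomx_tr A : tomx (tr A) = (tomx A)^T.
Proof. by apply/matrixP => i j; rewrite !mxE. Qed.

Lemma tomx_idm : tomx idm = 1%:M.
Proof.
apply/matrixP => i j; rewrite !mxE /idm.
case: Nat.eq_dec => [e|ne].
  have ij : i = j by apply: val_inj.
  by rewrite ij eqxx.
by case: (i =P j) => [e|_] //; case: ne; rewrite e.
Qed.

Lemma tomx_opp A : tomx (mopp A) = - tomx A.
Proof. by apply/matrixP => i j; rewrite !mxE. Qed.

Lemma mat_eqE A B : mat_eq 32 A B <-> tomx A = tomx B.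
Proof.
split=> [h|e i j hi hj].
  by apply/matrixP => i j; rewrite !mxE; apply: h; apply/ssrnat.ltP.
have hi' : (i < 32)%N by apply/ssrnat.ltP.
have hj' : (j < 32)%N by apply/ssrnat.ltP.
by have := congr1 (fun M : 'M[R]_32 => M (Ordinal hi') (Ordinal hj')) e; rewrite !mxE.
Qed.

Lemma vec_eqE x y : vec_eq 32 x y <-> tocol x = tocol y.
Proof.
split=> [h|e i hi].
  by apply/matrixP => i j; rewrite !mxE; apply: h; apply/ssrnat.ltP.
have hi' : (i < 32)%N by apply/ssrnat.ltP.
by have := congr1 (fun M : 'cV[R]_32 => M (Ordinal hi') 0) e; rewrite !mxE.
Qed.

Lemma tocol_mv A x : tocol (mv 32 A x) = tomx A *m tocol x.
Proof.
apply/matrixP => i j; rewrite !mxE /mv rsumE; apply: eq_bigr => k _; by rewrite !mxE.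
Qed.

Lemma dotE x y : dot 32 x y = ((tocol x)^T *m tocol y) 0 0.
Proof.
rewrite /dot rsumE mxE; apply: eq_bigr => k _; by rewrite !mxE.
Qed.

Lemma piCE (P : nat -> mat) x :
  tomx (piC 9 32 P x) = \sum_(i < 10) dot 32 (mv 32 (P i) x) x *: tomx (P i).
Proof.
apply/matrixP => a b; rewrite !mxE /piC rsumE summxE; apply: eq_bigr => k _.
by rewrite !mxE.
Qed.

Definition ofcol (u : 'cV[R]_32) : vec :=
  fun i => match insub i with Some k => u k 0 | None => 0 end.

Lemma tocol_ofcol u : tocol (ofcol u) = u.
Proof.
apply/matrixP => i j; rewrite !mxE /ofcol (ord1 j).
by rewrite insubT ?ltn_ord //= => h; congr (u _ _); apply: val_inj.
Qed.

End Bridge.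

Section MainS.
Variable P : nat -> mat.
Hypothesis HC : clifford_system 9 16 P.
Definition Pm (i : 'I_10) : 'M[R]_32 := tomx (P i).

Lemma le9 (i : 'I_10) : (i <= 9)%coq_nat.
Proof. apply/ssrnat.leP; rewrite -ltnS; exact: ltn_ord. Qed.

Lemma Pm_sym i : (Pm i)^T = Pm i.
Proof.
case: HC => Hs _; apply/matrixP => a b; rewrite !mxE.
by apply: (Hs i (le9 i)); apply/ssrnat.ltP; exact: ltn_ord.
Qed.

Lemma Pm_sq i : Pm i *m Pm i = 1%:M.
Proof.
case: HC => _ [Hq _]; have := Hq i (le9 i); move/mat_eqE.
by rewrite tomx_mm tomx_idm.
Qed.

Lemma Pm_anti i j : i != j -> Pm i *m Pm j = - (Pm j *m Pm i).
Proof.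
case: HC => _ [_ Ha] ne.
have ne' : (i : nat) <> j by move=> e; move/eqP: ne; apply; apply: val_inj.
have := Ha i j (le9 i) (le9 j) ne'; move/mat_eqE.
by rewrite tomx_opp !tomx_mm.
Qed.

Lemma trPP i j : \tr (Pm i *m Pm j) = if i == j then 32%:R else 0.
Proof.
case: eqVneq => [<-|ne]; first by rewrite Pm_sq mxtrace1.
have h : - \tr (Pm i *m Pm j) = \tr (Pm i *m Pm j).
  by rewrite {2}Pm_anti // raddfN /= mxtrace_mulC.
have h2 : \tr (Pm i *m Pm j) + \tr (Pm i *m Pm j) = 0 by rewrite -{1}h addNr.
by move/eqP: h2; rewrite -mulr2n mulrn_eq0 /= => /eqP.
Qed.

Lemma coefP (a b : 'I_10 -> R) :
  \sum_i a i *: Pm i = \sum_i b i *: Pm i -> forall j, a j = b j.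
Proof.
have key c j : \tr ((\sum_i c i *: Pm i) *m Pm j) = c j * 32%:R.
  rewrite mulmx_suml raddf_sum /= (bigD1 j) //= big1 ?addr0.
    by rewrite -scalemxAl mxtraceZ trPP eqxx.
  by move=> i ne; rewrite -scalemxAl mxtraceZ trPP (negbTE ne) mulr0.
move=> e j; have := key a j; rewrite e key.
have n0 : (32%:R : R) != 0 by rewrite pnatr_eq0.
by move/(mulIf n0).
Qed.

End MainS.

Definition bf (A : 'M[R]_32) (u v : 'cV[R]_32) : R := (u^T *m A *m v) 0 0.

Lemma bfDl A u1 u2 v : bf A (u1 + u2) v = bf A u1 v + bf A u2 v.
Proof. by rewrite /bf linearD /= !mulmxDl mxE. Qed.
Lemma bfDr A u v1 v2 : bf A u (v1 + v2) = bf A u v1 + bf A u v2.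
Proof. by rewrite /bf mulmxDr mxE. Qed.
Lemma bfZl A s u v : bf A (s *: u) v = s * bf A u v.
Proof. by rewrite /bf linearZ /= -!scalemxAl mxE. Qed.
Lemma bfZr A s u v : bf A u (s *: v) = s * bf A u v.
Proof. by rewrite /bf -scalemxAr mxE. Qed.
Lemma bf_delta A a b : bf A (delta_mx a 0) (delta_mx b 0) = A a b.
Proof. by rewrite /bf trmx_delta -rowE -colE !mxE. Qed.

Lemma qform (Q : 'M[R]_32) : Q^T = Q ->
  (forall u, bf 1%:M u u = 1 -> bf Q u u = 0) -> Q = 0.
Proof.
move=> Qs H.
have Haa c : Q c c = 0.
  by rewrite -bf_delta; apply: H; rewrite bf_delta mxE eqxx.
have Qba a b : Q b a = Q a b by rewrite -{1}Qs mxE.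
apply/matrixP => a b; rewrite [RHS]mxE.
case: (eqVneq a b) => [<-|ne]; first exact: Haa.
pose s : R := Num.sqrt (2%:R^-1).
have ss : s * s = 2%:R^-1 by rewrite -expr2 sqr_sqrtr // invr_ge0 ler0n.
pose u := s *: delta_mx a (0 : 'I_1) + s *: delta_mx b 0.
have E A : bf A u u = s * s * (A a a + A a b + A b a + A b b).
  rewrite /u !bfDl !bfDr !bfZl !bfZr !bf_delta.
  by rewrite !mulrA -!mulrDr !addrA.
have two : (2%:R : R) != 0 by rewrite pnatr_eq0.
have := H u; rewrite !E ss Haa Haa Qba add0r addr0 !mxE eqxx (negbTE ne) eq_sym (negbTE ne).
rewrite eqxx (mulr1n (1 : R)) (mulr0n (1 : R)) !addr0 -!mulr2n => h.
have h2 := h (mulVf two).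
by rewrite -[Q b a *+ 2]mulr_natl mulrA (mulVf two) mul1r in h2.
Qed.

Section PathC.
Local Open Scope R_scope.
Lemma pathC (f : R -> R) : continuity f -> f 0 = 1 ->
  (forall t, 0 <= t <= 1 -> f t * f t = 1) -> f 1 = 1.
Proof.
move=> cf f0 H.
have h1 : f 1 * f 1 = 1 by apply: H; lra.
case: (Req_dec (f 1) 1) => // ne.
have m1 : f 1 = -1.
  have : (f 1 - 1) * (f 1 + 1) = 0 by ring_simplify; lra.
  case/Rmult_integral => h; [exfalso; apply: ne; lra | lra].
have [z [hz fz]] := IVT (fun t => - f t) 0 1 (continuity_opp _ cf) Rlt_0_1
  ltac:(cbv beta; rewrite f0; lra) ltac:(cbv beta; rewrite m1; lra).
have := H z hz; have -> : f z = 0 by lra.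
lra.
Qed.
End PathC.

Lemma dot_ofcol u : dot 32 (ofcol u) (ofcol u) = bf 1%:M u u.
Proof. by rewrite dotE tocol_ofcol /bf mulmx1. Qed.

Lemma qE u (A : mat) : dot 32 (mv 32 A (ofcol u)) (ofcol u) = bf (tomx A)^T u u.
Proof. by rewrite dotE tocol_mv tocol_ofcol /bf trmx_mul. Qed.

Lemma bfB A B u v : bf (A - B) u v = bf A u v - bf B u v.
Proof. by rewrite /bf mulmxBr mulmxBl !mxE. Qed.

Section Hom.
Variable P : nat -> mat.
Hypothesis HC : clifford_system 9 16 P.
Variable G : mat -> Prop.
Hypothesis HG : orth_subgroup 32 G.
Hypothesis Hpc : path_connected 32 G.
Hypothesis Hleaf : forall x y, sphere 32 x -> sphere 32 y ->
  (same_leaf 9 32 P x y <-> exists g, G g /\ vec_eq 32 (mv 32 g x) y).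

Lemma orthG g : G g -> (tomx g)^T *m tomx g = 1%:M.
Proof.
case: HG => Ho _ Hg; have := Ho g Hg; rewrite /orthogonal; move/mat_eqE.
by rewrite tomx_mm tomx_tr tomx_idm.
Qed.

Lemma leafcoef x y : same_leaf 9 32 P x y ->
  forall i : 'I_10, dot 32 (mv 32 (P i) x) x = dot 32 (mv 32 (P i) y) y.
Proof.
rewrite /same_leaf; move/mat_eqE; rewrite !piCE => e i.
exact: (coefP HC e i).
Qed.

Lemma stepA g : G g -> forall i, Pm P i *m tomx g = tomx g *m Pm P i.
Proof.
move=> Hg i; set gm := tomx g.
have og := orthG Hg.
have key u : bf 1%:M u u = 1 -> bf (Pm P i - gm^T *m Pm P i *m gm) u u = 0.
  move=> hu; set x := ofcol u; set y := mv 32 g x.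
  have hx : sphere 32 x by rewrite /sphere dot_ofcol.
  have hy : sphere 32 y.
    rewrite /sphere dotE /y tocol_mv tocol_ofcol trmx_mul -mulmxA (mulmxA gm^T) og mul1mx.
    by move: hu; rewrite /bf mulmx1.
  have sl : same_leaf 9 32 P x y.
    by apply/(Hleaf hx hy); exists g; split => // k _.
  have := leafcoef sl i.
  rewrite qE /y dotE !tocol_mv tocol_ofcol -/(Pm P i) => e.
  by rewrite bfB -(Pm_sym HC i) e /bf !trmx_mul !(Pm_sym HC i) !mulmxA subrr.
have Qs : (Pm P i - gm^T *m Pm P i *m gm)^T = Pm P i - gm^T *m Pm P i *m gm.
  by rewrite linearB /= !trmx_mul trmxK (Pm_sym HC i) mulmxA.
have := qform Qs key => /eqP; rewrite subr_eq0 => /eqP e.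
have og2 : gm *m gm^T = 1%:M := mulmx1C og.
by rewrite [in RHS]e !mulmxA og2 mul1mx.
Qed.
Lemma scalarG g : G g -> tomx g = (g 0%N 0%N)%:M.
Proof.
move=> Hg.
have e := commutant (Pm_sym HC) (Pm_sq HC) (Pm_anti HC) (stepA Hg).
have e0 := congr1 (fun M : 'M[R]_32 => M 0 0) e.
rewrite /= [in RHS]mxE eqxx mulr1n in e0.
by rewrite {1}e -e0 mxE.
Qed.

Lemma sqG g : G g -> g 0%N 0%N * g 0%N 0%N = 1.
Proof.
move=> Hg; have := orthG Hg; rewrite (scalarG Hg) tr_scalar_mx -scalar_mxM.
move/(congr1 (fun M : 'M[R]_32 => M 0 0)); by rewrite !mxE eqxx !mulr1n.
Qed.

Lemma oneG g : G g -> tomx g = 1%:M.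
Proof.
move=> Hg; case: HG => _ [HI _].
have [gam [Hgam [h0 [h1 hc]]]] := Hpc HI Hg.
have z32 : (0 < 32)%coq_nat by apply/ssrnat.ltP.
have f0 : gam R0 0%N 0%N = R1.
  by rewrite (h0 0%N 0%N z32 z32) /idm; case: Nat.eq_dec.
have e := pathC (hc 0%N 0%N z32 z32) f0
  (fun t ht => sqG (Hgam t ht)).
rewrite (scalarG Hg) -(h1 0%N 0%N z32 z32).
exact: (congr1 (fun r : R => r%:M) e).
Qed.
End Hom.

Theorem proposition5p3 :
  forall P : nat -> mat, clifford_system 9 16 P -> ~ homogeneous_clifford 9 16 P.
Proof.
move=> P HC [G [HG [Hpc Hleaf]]].
pose u : 'cV[R]_32 := delta_mx 0 0.
pose x := ofcol u. pose y := ofcol (- u).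
have bu : bf 1%:M u u = 1 by rewrite bf_delta mxE eqxx.
have bN A : bf A (- u) (- u) = bf A u u.
  by rewrite -scaleN1r bfZl bfZr !mulN1r opprK.
have hx : sphere 32 x by rewrite /sphere dot_ofcol.
have hy : sphere 32 y by rewrite /sphere dot_ofcol bN.
have sl : same_leaf 9 32 P x y.
  apply/mat_eqE; rewrite !piCE; apply: eq_bigr => i _; by rewrite !qE bN.
have [g [Hg hv]] := proj1 (Hleaf x y hx hy) sl.
have o := oneG HC HG Hpc Hleaf Hg.
move/vec_eqE: hv; rewrite tocol_mv !tocol_ofcol o mul1mx => e.
have := congr1 (fun M : 'cV[R]_32 => M 0 0) e; rewrite !mxE eqxx mulr1n => /eqP.
rewrite -subr_eq0 opprK -mulr2n pnatr_eq0.
done.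
Qed.
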